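(* There exists a kernel $K\in C(\mathbb{R}^3;\mathbb{R}^{3\times3})$ admitting a flow $X$ of $\omega_0$ (in the sense below) such that $X(t,\Xi)\subset\{0\}\times[-1,1]\times\{0\}$ for all sufficiently large $t>0$.
   Context: Let $\Xi=\{0\}\times[-1,1]\times[-1,1]\subset\mathbb{R}^3$, $\mathcal{H}^2_\Xi$ the two-dimensional Hausdorff measure on $\Xi$, and $\omega_0=(0,1,0)\,\mathcal{H}^2_\Xi$. A kernel $K\in C(\mathbb{R}^3;\mathbb{R}^{3\times3})$ admits a flow $X\in C([0,\infty)\times\Xi;\mathbb{R}^3)$ of $\omega_0$ if $X$ is differentiable with respect to $t$ and to $\alpha_2$, the velocity $u(t,x)=\int_\Xi K(x-X(t,\alpha))\,\partial_{\alpha_2}X(t,\alpha)\,d\mathcal{H}^2_\Xi(\alpha)$ exists for all $t\ge0$ and $x\in X(t,\Xi)$, and $\partial_tX(t,a)=u(t,X(t,a))$, $X(0,a)=a$ for all $(t,a)\in[0,\infty)\times\Xi$. *)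

(* Defs.v *)
From Stdlib Require Import Reals.
Open Scope R_scope.

Inductive idx3 : Type := I0 | I1 | I2.
Definition vec3 := idx3 -> R.
Definition mat3 := idx3 -> idx3 -> R.

Definition mk3 (a b c : R) : vec3 :=
  fun i => match i with I0 => a | I1 => b | I2 => c end.
Definition vsub (x y : vec3) : vec3 := fun i => x i - y i.
Definition mulmv (M : mat3) (v : vec3) : vec3 :=
  fun i => M i I0 * v I0 + M i I1 * v I1 + M i I2 * v I2.
Definition norm3 (v : vec3) : R := sqrt (v I0 ^ 2 + v I1 ^ 2 + v I2 ^ 2).

Definition kernel_continuous (K : vec3 -> mat3) : Prop :=
  forall (x : vec3) (eps : R), eps > 0 -> exists delta, delta > 0 /\
    forall y : vec3, norm3 (vsub y x) < delta ->
      forall i j, Rabs (K y i j - K x i j) < eps.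

(** Parameter domain Xi = {0} x [-1,1] x [-1,1]; a point (0,a2,a3) of Xi is
    represented by its coordinates (a2,a3). *)
Definition inXi (a2 a3 : R) : Prop := -1 <= a2 <= 1 /\ -1 <= a3 <= 1.

Definition flow_map := R -> R -> R -> vec3.

Definition flow_continuous (X : flow_map) : Prop :=
  forall t a2 a3, 0 <= t -> inXi a2 a3 ->
  forall eps, eps > 0 -> exists delta, delta > 0 /\
    forall s b2 b3, 0 <= s -> inXi b2 b3 ->
      Rabs (s - t) < delta -> Rabs (b2 - a2) < delta -> Rabs (b3 - a3) < delta ->
      forall i, Rabs (X s b2 b3 i - X t a2 a3 i) < eps.

Definition has_deriv_within (D : R -> Prop) (g : R -> R) (x0 l : R) : Prop :=
  forall eps, eps > 0 -> exists delta, delta > 0 /\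
    forall h, D (x0 + h) -> h <> 0 -> Rabs h < delta ->
      Rabs ((g (x0 + h) - g x0) / h - l) < eps.

Fixpoint rsum (n : nat) (g : nat -> R) : R :=
  match n with O => 0 | S k => rsum k g + g k end.

Definition tagged_partition (a b : R) (n : nat) (p s : nat -> R) (delta : R) : Prop :=
  p O = a /\ p n = b /\
  forall i, (i < n)%nat ->
    p i < p (S i) /\ p (S i) - p i < delta /\ p i <= s i <= p (S i).

(** Riemann integral over the square [-1,1]^2 (w.r.t. Lebesgue measure on the
    square, i.e. H^2 on Xi), defined by grid Riemann sums. *)
Definition is_integral_Xi (f : R -> R -> R) (I : R) : Prop :=
  forall eps, eps > 0 -> exists delta, delta > 0 /\
    forall n m p s q r,
      tagged_partition (-1) 1 n p s delta ->
      tagged_partition (-1) 1 m q r delta ->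
      Rabs (rsum n (fun i => rsum m (fun j =>
              f (s i) (r j) * (p (S i) - p i) * (q (S j) - q j))) - I) < eps.

Definition is_integral_Xi_vec (f : R -> R -> vec3) (I : vec3) : Prop :=
  forall i, is_integral_Xi (fun a2 a3 => f a2 a3 i) (I i).

(** K admits a flow X of omega_0 = (0,1,0) H^2|_Xi.  dX2 is the partial
    derivative of X with respect to alpha_2. *)
Definition admits_flow (K : vec3 -> mat3) (X : flow_map) : Prop :=
  flow_continuous X /\
  (forall a2 a3, inXi a2 a3 -> X 0 a2 a3 = mk3 0 a2 a3) /\
  exists dX2 : flow_map,
    (forall t a2 a3, 0 <= t -> inXi a2 a3 -> forall i,
        has_deriv_within (fun b => -1 <= b <= 1)
          (fun b => X t b a3 i) a2 (dX2 t a2 a3 i)) /\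
    (forall t a2 a3, 0 <= t -> inXi a2 a3 ->
       exists u : vec3,
         is_integral_Xi_vec
           (fun b2 b3 => mulmv (K (vsub (X t a2 a3) (X t b2 b3))) (dX2 t b2 b3)) u /\
         forall i, has_deriv_within (fun s => 0 <= s)
                     (fun s => X s a2 a3 i) t (u i)).

(* Main.v *)
Require Import Defs.
From Stdlib Require Import Reals Lra Psatz Lia.
Open Scope R_scope.

Lemma rsum_ext n f g : (forall i, (i < n)%nat -> f i = g i) -> rsum n f = rsum n g.
Proof. induction n; simpl; intros; auto. rewrite IHn by (intros; apply H; lia). rewrite H by lia. auto. Qed.
Lemma rsum_plus n f g : rsum n (fun i => f i + g i) = rsum n f + rsum n g.
Proof. induction n; simpl; [ring|rewrite IHn; ring]. Qed.
Lemma rsum_scal n c f : rsum n (fun i => c * f i) = c * rsum n f.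
Proof. induction n; simpl; [ring|rewrite IHn; ring]. Qed.
Lemma rsum_tele n g : rsum n (fun i => g (S i) - g i) = g n - g O.
Proof. induction n; simpl; [ring|rewrite IHn; ring]. Qed.
Lemma rsum_abs n f g : (forall i, (i < n)%nat -> Rabs (f i) <= g i) -> Rabs (rsum n f) <= rsum n g.
Proof. induction n; simpl; intros.
 - rewrite Rabs_R0; lra.
 - eapply Rle_trans; [apply Rabs_triang|]. apply Rplus_le_compat; [apply IHn; intros; apply H; lia| apply H; lia]. Qed.

Lemma tp_mono a b n p s d : tagged_partition a b n p s d ->
  forall k i, (i + k <= n)%nat -> p i <= p (i + k)%nat.
Proof. intros [H0 [H1 H2]] k. induction k; intros i Hi.
 - rewrite Nat.add_0_r; lra.
 - replace (i + S k)%nat with (S (i+k)) by lia. specialize (IHk i ltac:(lia)).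
   destruct (H2 (i+k)%nat ltac:(lia)) as [A _]. lra. Qed.

Lemma tp_range n p s d : tagged_partition (-1) 1 n p s d ->
  forall i, (i < n)%nat -> -1 <= s i <= 1.
Proof. intros H i Hi. pose proof (tp_mono _ _ _ _ _ _ H) as M.
 destruct H as [H0 [H1 H2]]. destruct (H2 i Hi) as [_ [_ [B C]]].
 pose proof (M i O ltac:(lia)). pose proof (M (n - S i)%nat (S i) ltac:(lia)).
 replace (O + i)%nat with i in * by lia. replace (S i + (n - S i))%nat with n in * by lia.
 lra. Qed.

Lemma tp_sum n p s d : tagged_partition (-1) 1 n p s d -> rsum n (fun i => p (S i) - p i) = 2.
Proof. intros [H0 [H1 _]]. rewrite (rsum_tele n p). lra. Qed.

Lemma tp_tag n p s d : tagged_partition (-1) 1 n p s d -> Rabs (rsum n (fun i => s i * (p (S i) - p i))) <= d.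
Proof. intros H.
 assert (E : rsum n (fun i => s i * (p (S i) - p i)) =
   rsum n (fun i => (s i - (p (S i) + p i)/2) * (p (S i) - p i)) + rsum n (fun i => (p (S i))^2/2 - (p i)^2/2)).
 { rewrite <- rsum_plus. apply rsum_ext. intros. field. }
 rewrite E, (rsum_tele n (fun i => p i ^2/2)). destruct H as [H0 [H1 H2]]. rewrite H0, H1.
 replace (1 ^ 2 / 2 - (-1) ^ 2 / 2) with 0 by field. rewrite Rplus_0_r.
 eapply Rle_trans. apply (rsum_abs _ _ (fun i => d/2 * (p (S i) - p i))).
 - intros i Hi. destruct (H2 i Hi) as [A [B C]]. rewrite Rabs_mult.
   rewrite (Rabs_right (p (S i) - p i)) by lra. apply Rmult_le_compat_r; [lra|].
   apply Rabs_le; split; lra.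
 - rewrite rsum_scal. rewrite (rsum_tele n p), H0, H1. lra.
Qed.

Lemma integral_lin (f : R -> R -> R) c a3 I :
  (forall b2 b3, -1<=b2<=1 -> -1<=b3<=1 -> f b2 b3 = c*(a3 - b3)) -> I = 4*c*a3 ->
  is_integral_Xi f I.
Proof. intros Hf HI eps Heps. exists (eps / (2 * Rabs c + 1)). split.
 { apply Rdiv_lt_0_compat; [lra|]. pose proof (Rabs_pos c); lra. }
 intros n m p s q r Hp Hq.
 assert (E : rsum n (fun i => rsum m (fun j => f (s i) (r j) * (p (S i) - p i) * (q (S j) - q j)))
   = rsum n (fun i => p (S i) - p i) * (c * (a3 * rsum m (fun j => q (S j) - q j) - rsum m (fun j => r j * (q (S j) - q j))))).
 { rewrite Rmult_comm, <- rsum_scal. apply rsum_ext. intros i Hi.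
   assert (Inner : rsum m (fun j => f (s i) (r j) * (p (S i) - p i) * (q (S j) - q j)) =
     (p (S i) - p i) * rsum m (fun j => c * (a3 * (q (S j) - q j)) + (-c) * (r j * (q (S j) - q j)))).
   { rewrite <- rsum_scal. apply rsum_ext. intros j Hj.
     rewrite Hf by (eapply tp_range; eauto). ring. }
   rewrite Inner, rsum_plus, rsum_scal, rsum_scal, rsum_scal. ring. }
 rewrite E, (tp_sum _ _ _ _ Hp), (tp_sum _ _ _ _ Hq), HI.
 pose proof (tp_tag _ _ _ _ Hq). set (S := rsum m (fun j => r j * (q (S j) - q j))) in *.
 replace (2 * (c * (a3 * 2 - S)) - 4 * c * a3) with (-2 * c * S) by ring.
 rewrite !Rabs_mult. replace (Rabs (-2)) with 2 by (rewrite Rabs_left by lra; lra).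
 assert (Rabs S * (2*Rabs c) <= eps / (2 * Rabs c + 1) * (2 * Rabs c)).
 { apply Rmult_le_compat_r; [pose proof (Rabs_pos c); lra| lra]. }
 assert (eps / (2 * Rabs c + 1) * (2 * Rabs c) < eps).
 { pose proof (Rabs_pos c). apply (Rmult_lt_reg_r (2*Rabs c+1)); [lra|].
   field_simplify; [|lra]. nra. }
 nra.
Qed.

Definition ccont (f : vec3 -> R) (x : vec3) := forall eps, eps > 0 -> exists d, d > 0 /\
  forall y, (forall i, Rabs (y i - x i) < d) -> Rabs (f y - f x) < eps.

Lemma ccont_const c x : ccont (fun _ => c) x.
Proof. intros e He. exists 1. split; [lra|]. intros. unfold Rminus. rewrite Rplus_opp_r, Rabs_R0. lra. Qed.

Lemma ccont_coord i x : ccont (fun y => y i) x.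
Proof. intros e He. exists e. split; [lra|]. intros y H. apply H. Qed.

Lemma ccont_lip2 (h : R -> R -> R) f g x :
  (forall u v u' v', Rabs (h u v - h u' v') <= Rabs (u - u') + Rabs (v - v')) ->
  ccont f x -> ccont g x -> ccont (fun y => h (f y) (g y)) x.
Proof. intros Hh Hf Hg e He. destruct (Hf (e/2) ltac:(lra)) as [d1 [D1 H1]].
 destruct (Hg (e/2) ltac:(lra)) as [d2 [D2 H2]]. exists (Rmin d1 d2). split.
 { apply Rmin_pos; lra. }
 intros y Hy. eapply Rle_lt_trans. apply Hh.
 assert (forall i, Rabs (y i - x i) < d1) by (intros i; specialize (Hy i); pose proof (Rmin_l d1 d2); lra).
 assert (forall i, Rabs (y i - x i) < d2) by (intros i; specialize (Hy i); pose proof (Rmin_r d1 d2); lra).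
 specialize (H1 y H). specialize (H2 y H0). lra. Qed.

Lemma lip_plus : forall u v u' v', Rabs ((u + v) - (u' + v')) <= Rabs (u - u') + Rabs (v - v').
Proof. intros. replace (u + v - (u' + v')) with ((u-u') + (v-v')) by ring. apply Rabs_triang. Qed.
Lemma lip_minus : forall u v u' v', Rabs ((u - v) - (u' - v')) <= Rabs (u - u') + Rabs (v - v').
Proof. intros. replace (u - v - (u' - v')) with ((u-u') + -(v-v')) by ring.
 rewrite <- (Rabs_Ropp (v - v')). apply Rabs_triang. Qed.
Lemma lip_max : forall u v u' v', Rabs (Rmax u v - Rmax u' v') <= Rabs (u - u') + Rabs (v - v').
Proof. intros. unfold Rmax. destruct (Rle_dec u v); destruct (Rle_dec u' v');
 unfold Rabs; repeat destruct Rcase_abs; lra. Qed.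
Lemma lip_min : forall u v u' v', Rabs (Rmin u v - Rmin u' v') <= Rabs (u - u') + Rabs (v - v').
Proof. intros. unfold Rmin. destruct (Rle_dec u v); destruct (Rle_dec u' v');
 unfold Rabs; repeat destruct Rcase_abs; lra. Qed.

Lemma ccont_mult f g x : ccont f x -> ccont g x -> ccont (fun y => f y * g y) x.
Proof. intros Hf Hg e He.
 set (A := Rabs (f x) + 1). set (B := Rabs (g x) + 1).
 assert (HA : A > 0) by (unfold A; pose proof (Rabs_pos (f x)); lra).
 assert (HB : B > 0) by (unfold B; pose proof (Rabs_pos (g x)); lra).
 destruct (Hf (Rmin 1 (e/(2*B))) ltac:(apply Rmin_pos; [lra| apply Rdiv_lt_0_compat; lra])) as [d1 [D1 H1]].
 destruct (Hg (e/(2*A)) ltac:(apply Rdiv_lt_0_compat; lra)) as [d2 [D2 H2]].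
 exists (Rmin d1 d2). split. { apply Rmin_pos; lra. }
 intros y Hy.
 assert (Y1 : forall i, Rabs (y i - x i) < d1) by (intros i; specialize (Hy i); pose proof (Rmin_l d1 d2); lra).
 assert (Y2 : forall i, Rabs (y i - x i) < d2) by (intros i; specialize (Hy i); pose proof (Rmin_r d1 d2); lra).
 specialize (H1 y Y1). specialize (H2 y Y2).
 pose proof (Rmin_l 1 (e/(2*B))). pose proof (Rmin_r 1 (e/(2*B))).
 replace (f y * g y - f x * g x) with (f y * (g y - g x) + g x * (f y - f x)) by ring.
 eapply Rle_lt_trans. apply Rabs_triang. rewrite !Rabs_mult.
 assert (Rabs (f y) <= A). { unfold A. pose proof (Rabs_triang_inv (f y) (f x)). lra. }
 assert (Rabs (f y) * Rabs (g y - g x) <= A * (e/(2*A))).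
 { apply Rmult_le_compat; try apply Rabs_pos; lra. }
 assert (Rabs (g x) * Rabs (f y - f x) <= B * (e/(2*B))).
 { assert (Rabs (g x) <= B) by (unfold B; lra). apply Rmult_le_compat; try apply Rabs_pos; lra. }
 assert (A * (e/(2*A)) = e/2) by (field; lra).
 assert (B * (e/(2*B)) = e/2) by (field; lra).
 assert (Rabs (g x) * Rabs (f y - f x) < B * (e/(2*B)) \/ Rabs (f y) * Rabs (g y - g x) < A * (e/(2*A))).
 { right. apply (Rle_lt_trans _ (A * Rabs (g y - g x))).
   apply Rmult_le_compat_r; [apply Rabs_pos| lra]. apply Rmult_lt_compat_l; lra. }
 lra. Qed.

Lemma ccont_inv f x : ccont f x -> f x <> 0 -> ccont (fun y => / f y) x.
Proof. intros Hf Hn e He.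
 set (a := Rabs (f x)). assert (Ha : a > 0) by (unfold a; apply Rabs_pos_lt; auto).
 destruct (Hf (Rmin (a/2) (e*a*a/2)) ltac:(apply Rmin_pos; [lra| apply Rdiv_lt_0_compat; [|lra]; apply Rmult_lt_0_compat; [apply Rmult_lt_0_compat|]; lra])) as [d [D H]].
 exists d. split; auto. intros y Hy. specialize (H y Hy).
 pose proof (Rmin_l (a/2) (e*a*a/2)). pose proof (Rmin_r (a/2) (e*a*a/2)).
 assert (Hfy : Rabs (f y) >= a/2). { pose proof (Rabs_triang_inv (f x) (f y)). rewrite Rabs_minus_sym in H. unfold a in *. lra. }
 assert (f y <> 0). { intro E; rewrite E, Rabs_R0 in Hfy; lra. }
 replace (/ f y - / f x) with ((f x - f y) / (f y * f x)) by (field; auto).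
 unfold Rdiv. rewrite Rabs_mult, Rabs_inv, Rabs_mult. fold a.
 rewrite Rabs_minus_sym.
 apply (Rmult_lt_reg_r (Rabs (f y) * a)). { apply Rmult_lt_0_compat; lra. }
 rewrite Rmult_assoc, Rinv_l by (apply Rgt_not_eq; apply Rmult_lt_0_compat; lra). rewrite Rmult_1_r.
 assert (e * a * a / 2 <= e * (Rabs (f y) * a)).
 { assert (a * a / 2 <= Rabs (f y) * a) by nra. nra. }
 lra. Qed.

Lemma ccont_zero f a M x : ccont f x -> f x = 0 -> (forall y, Rabs (a y) <= M) ->
  ccont (fun y => a y * f y) x.
Proof. intros Hf Hz HM e He. assert (M >= 0) by (specialize (HM x); pose proof (Rabs_pos (a x)); lra).
 destruct (Hf (e/(M+1)) ltac:(apply Rdiv_lt_0_compat; lra)) as [d [D HH]].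
 exists d. split; auto. intros y Hy. specialize (HH y Hy). rewrite Hz in *. rewrite Rmult_0_r, Rminus_0_r.
 rewrite Rminus_0_r in HH. rewrite Rabs_mult. specialize (HM y).
 apply (Rle_lt_trans _ (M * Rabs (f y))). apply Rmult_le_compat_r; [apply Rabs_pos|lra].
 apply (Rle_lt_trans _ ((M+1) * Rabs (f y))). pose proof (Rabs_pos (f y)); nra.
 replace e with ((M+1) * (e/(M+1))) by (field; lra). apply Rmult_lt_compat_l; lra. Qed.

Definition clamp01 v := Rmax 0 (Rmin v 1).
Definition qf (y:vec3) := clamp01 (1 - y I0 / y I2).
Definition med lo v hi := Rmax lo (Rmin v hi).
Definition Ff y := med (-2 * qf y) (y I2 / qf y) (2 * qf y).
Definition W1 y := (3 * qf y - 2) / 4 * Ff y.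
Definition W3 y := (-1/2) * Ff y.

Lemma ccont_ext f g x : ccont f x -> (forall y, f y = g y) -> ccont g x.
Proof. intros H E e He. destruct (H e He) as [d [D Hd]]. exists d. split; auto.
 intros y Hy. rewrite <- !E. auto. Qed.

Lemma qf_range y : 0 <= qf y <= 1.
Proof. unfold qf, clamp01, Rmax, Rmin. repeat destruct Rle_dec; lra. Qed.

Lemma med_bound q v : 0 <= q -> Rabs (med (-2*q) v (2*q)) <= 2*q.
Proof. intros. unfold med, Rmax, Rmin. repeat destruct Rle_dec; apply Rabs_le; lra. Qed.
Lemma med_bound2 q v : 0 <= q -> Rabs (med (-2*q) v (2*q)) <= Rabs v.
Proof. intros. unfold med, Rmax, Rmin. repeat destruct Rle_dec; unfold Rabs; repeat destruct Rcase_abs; lra. Qed.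

Lemma Ff_b1 y : Rabs (Ff y) <= 2 * qf y.
Proof. apply med_bound, qf_range. Qed.
Lemma Ff_b2 y : Rabs (Ff y) <= Rabs (y I2 / qf y).
Proof. apply med_bound2, qf_range. Qed.

Lemma Ff_zero y : y I2 = 0 -> Ff y = 0.
Proof. intros H. pose proof (Ff_b2 y). rewrite H in H0. unfold Rdiv in H0. rewrite Rmult_0_l, Rabs_R0 in H0.
 pose proof (Rabs_pos (Ff y)). destruct (Req_dec (Ff y) 0); auto. pose proof (Rabs_pos_lt _ H2). lra. Qed.

Lemma ccont_qf x : x I2 <> 0 -> ccont qf x.
Proof. intros Hx. unfold qf, clamp01.
 apply (ccont_lip2 Rmax (fun _ => 0) (fun y => Rmin (1 - y I0 / y I2) 1)); [apply lip_max|apply ccont_const|].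
 apply (ccont_lip2 Rmin (fun y => 1 - y I0 / y I2) (fun _ => 1)); [apply lip_min| |apply ccont_const].
 apply (ccont_lip2 Rminus (fun _ => 1) (fun y => y I0 / y I2)); [apply lip_minus|apply ccont_const|].
 apply (ccont_mult (fun y => y I0) (fun y => / y I2)); [apply ccont_coord|].
 apply (ccont_inv (fun y => y I2)); [apply ccont_coord|auto]. Qed.

Lemma ccont_Ff x : ccont Ff x.
Proof. destruct (Req_dec (x I2) 0) as [Hx|Hx].
 - intros e He. exists (e*e/2). split; [nra|]. intros y Hy. rewrite (Ff_zero x Hx), Rminus_0_r.
   specialize (Hy I2). rewrite Hx, Rminus_0_r in Hy.
   pose proof (qf_range y). destruct (Rlt_le_dec (2 * qf y) e).
   + pose proof (Ff_b1 y). lra.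
   + pose proof (Ff_b2 y). eapply Rle_lt_trans; [apply H0|].
     unfold Rdiv. rewrite Rabs_mult, Rabs_inv, (Rabs_right (qf y)) by lra.
     apply (Rmult_lt_reg_r (qf y)); [lra|]. rewrite Rmult_assoc, Rinv_l, Rmult_1_r by lra. nra.
 - destruct (Req_dec (qf x) 0) as [Hq|Hq].
   + assert (Ff x = 0). { pose proof (Ff_b1 x). rewrite Hq in H. pose proof (Rabs_pos (Ff x)).
       destruct (Req_dec (Ff x) 0); auto. pose proof (Rabs_pos_lt _ H1). lra. }
     intros e He. destruct (ccont_qf x Hx (e/2) ltac:(lra)) as [d [D Hd]]. exists d. split; auto.
     intros y Hy. specialize (Hd y Hy). rewrite H, Rminus_0_r. rewrite Hq, Rminus_0_r in Hd.
     pose proof (Ff_b1 y). pose proof (qf_range y). rewrite Rabs_right in Hd by lra. lra.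
   + assert (Hq' : ccont qf x) by (apply ccont_qf; auto).
     unfold Ff, med.
     apply (ccont_lip2 Rmax (fun y => -2 * qf y) (fun y => Rmin (y I2 / qf y) (2 * qf y))); [apply lip_max| |].
     { apply (ccont_mult (fun _ => -2) qf); [apply ccont_const|auto]. }
     apply (ccont_lip2 Rmin (fun y => y I2 / qf y) (fun y => 2 * qf y)); [apply lip_min| |].
     { apply (ccont_mult (fun y => y I2) (fun y => / qf y)); [apply ccont_coord|]. apply ccont_inv; auto. }
     { apply (ccont_mult (fun _ => 2) qf); [apply ccont_const|auto]. }
Qed.

Lemma ccont_W3 x : ccont W3 x.
Proof. unfold W3. apply (ccont_mult (fun _ => -1/2) Ff); [apply ccont_const|apply ccont_Ff]. Qed.

Lemma ccont_W1 x : ccont W1 x.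
Proof. unfold W1. destruct (Req_dec (Ff x) 0) as [H|H].
 - apply (ccont_zero Ff (fun y => (3 * qf y - 2) / 4) 1); [apply ccont_Ff|auto|].
   intros y. pose proof (qf_range y). apply Rabs_le; split; lra.
 - assert (x I2 <> 0) by (intro E; apply H, Ff_zero, E).
   apply (ccont_mult (fun y => (3 * qf y - 2) / 4) Ff); [|apply ccont_Ff].
   apply (ccont_mult (fun y => 3 * qf y - 2) (fun _ => /4)); [|apply ccont_const].
   apply (ccont_lip2 Rminus (fun y => 3 * qf y) (fun _ => 2)); [apply lip_minus| |apply ccont_const].
   apply (ccont_mult (fun _ => 3) qf); [apply ccont_const|apply ccont_qf; auto].
Qed.

Definition mt t := Rmax (1 - t) 0.
Definition phi t := mt t ^ 2.
Definition nu t := mt t ^ 2 - mt t ^ 3.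
Definition dphi t := -2 * mt t.
Definition dnu t := 3 * mt t ^ 2 - 2 * mt t.
Definition Xf : flow_map := fun t a2 a3 => mk3 (nu t * a3) a2 (phi t * a3).
Definition dXf : flow_map := fun _ _ _ => mk3 0 1 0.
Definition Kf (y : vec3) : mat3 := fun i j => match j with I1 => mk3 (W1 y) 0 (W3 y) i | _ => 0 end.

Lemma mt_range t : 0 <= t -> 0 <= mt t <= 1.
Proof. intros. unfold mt, Rmax. destruct Rle_dec; lra. Qed.
Lemma mt_lip s t : Rabs (mt s - mt t) <= Rabs (s - t).
Proof. unfold mt. eapply Rle_trans. apply lip_max. replace (0 - 0) with 0 by ring. rewrite Rabs_R0, Rplus_0_r.
 replace (1 - s - (1 - t)) with (-(s-t)) by ring. rewrite Rabs_Ropp. lra. Qed.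
Lemma mt_big t : t > 1 -> mt t = 0.
Proof. intros. unfold mt, Rmax. destruct Rle_dec; lra. Qed.

Lemma mq (a b : R) : a <= 1 -> b <= 1 ->
  Rabs ((Rmax b 0)^2 - (Rmax b 0)^3 - ((Rmax a 0)^2 - (Rmax a 0)^3) - (3*(Rmax a 0)^2 - 2*Rmax a 0)*(a-b)) <= 7*(a-b)^2.
Proof.
intros. pose proof (pow2_ge_0 (a-b)). unfold Rmax. destruct (Rle_dec b 0); destruct (Rle_dec a 0); apply Rabs_le.
- split; nra.
- assert (0 < a) by lra. assert (a <= a - b) by lra. split; nra.
- assert (0 < b) by lra. assert (b <= b - a) by lra. split; nra.
- assert (0 < b) by lra. assert (0<a) by lra.
  replace (b ^ 2 - b ^ 3 - (a ^ 2 - a ^ 3) - (3 * a ^ 2 - 2 * a) * (a - b)) with ((a-b)^2*(1 - b - 2*a)) by ring.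
  split; nra.
Qed.
Lemma pq (a b : R) : a <= 1 -> b <= 1 ->
  Rabs ((Rmax b 0)^2 - (Rmax a 0)^2 - (-2*Rmax a 0)*(a-b)) <= 7*(a-b)^2.
Proof.
intros. pose proof (pow2_ge_0 (a-b)). unfold Rmax. destruct (Rle_dec b 0); destruct (Rle_dec a 0); apply Rabs_le.
- split; nra.
- assert (0 < a) by lra. assert (a <= a - b) by lra. split; nra.
- assert (0 < b) by lra. assert (b <= b - a) by lra. split; nra.
- split; nra.
Qed.

Lemma deriv_quad (g : R -> R) t l C : 0 <= C ->
  (forall h, 0 <= t + h -> Rabs (g (t+h) - g t - l*h) <= C * h^2) ->
  has_deriv_within (fun s => 0 <= s) g t l.
Proof. intros HC H e He. exists (e/(C+1)). split; [apply Rdiv_lt_0_compat; lra|].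
 intros h Hh Hn Hd. specialize (H h Hh).
 replace ((g (t + h) - g t) / h - l) with ((g (t+h) - g t - l*h) / h) by (field; auto).
 unfold Rdiv. rewrite Rabs_mult, Rabs_inv.
 pose proof (Rabs_pos_lt h Hn).
 apply (Rmult_lt_reg_r (Rabs h)); auto. rewrite Rmult_assoc, Rinv_l, Rmult_1_r by lra.
 replace (h^2) with (Rabs h * Rabs h) in H by (rewrite <- Rabs_mult; simpl; rewrite Rmult_1_r; apply Rabs_right; nra).
 assert (Rabs h * (C+1) < e). { apply (Rmult_lt_reg_r (/(C+1))). apply Rinv_0_lt_compat; lra.
   rewrite Rmult_assoc, Rinv_r, Rmult_1_r by lra. auto. }
 nra. Qed.

Lemma nu_deriv t a3 : 0 <= t -> -1 <= a3 <= 1 ->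
  has_deriv_within (fun s => 0 <= s) (fun s => nu s * a3) t (dnu t * a3).
Proof. intros Ht Ha. apply (deriv_quad _ _ _ 7); [lra|]. intros h Hh.
 pose proof (mq (1 - t) (1 - (t+h)) ltac:(lra) ltac:(lra)).
 replace (1 - t - (1 - (t + h))) with h in H by ring.
 replace (nu (t + h) * a3 - nu t * a3 - dnu t * a3 * h) with
   (a3 * ((Rmax (1 - (t + h)) 0)^2 - (Rmax (1 - (t + h)) 0)^3 - ((Rmax (1 - t) 0)^2 - (Rmax (1 - t) 0)^3) - (3*(Rmax (1 - t) 0)^2 - 2*Rmax (1 - t) 0)*h))
   by (unfold nu, dnu, mt; ring).
 rewrite Rabs_mult. assert (Rabs a3 <= 1) by (apply Rabs_le; lra).
 pose proof (Rabs_pos a3). pose proof (Rabs_pos ((Rmax (1 - (t + h)) 0)^2 - (Rmax (1 - (t + h)) 0)^3 - ((Rmax (1 - t) 0)^2 - (Rmax (1 - t) 0)^3) - (3*(Rmax (1 - t) 0)^2 - 2*Rmax (1 - t) 0)*h)).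
 nra. Qed.

Lemma phi_deriv t a3 : 0 <= t -> -1 <= a3 <= 1 ->
  has_deriv_within (fun s => 0 <= s) (fun s => phi s * a3) t (dphi t * a3).
Proof. intros Ht Ha. apply (deriv_quad _ _ _ 7); [lra|]. intros h Hh.
 pose proof (pq (1 - t) (1 - (t+h)) ltac:(lra) ltac:(lra)).
 replace (1 - t - (1 - (t + h))) with h in H by ring.
 replace (phi (t + h) * a3 - phi t * a3 - dphi t * a3 * h) with
   (a3 * ((Rmax (1 - (t + h)) 0)^2 - (Rmax (1 - t) 0)^2 - (-2*Rmax (1 - t) 0)*h))
   by (unfold phi, dphi, mt; ring).
 rewrite Rabs_mult. assert (Rabs a3 <= 1) by (apply Rabs_le; lra).
 pose proof (Rabs_pos a3). pose proof (Rabs_pos ((Rmax (1 - (t + h)) 0)^2 - (Rmax (1 - t) 0)^2 - (-2*Rmax (1 - t) 0)*h)).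
 nra. Qed.

Lemma const_deriv (c : R) t : has_deriv_within (fun s => 0 <= s) (fun _ => c) t 0.
Proof. intros e He. exists 1. split; [lra|]. intros h _ Hn _.
 replace ((c - c) / h - 0) with 0 by (field; auto). rewrite Rabs_R0; lra. Qed.

Lemma traj t a2 a3 b2 b3 : 0 <= t -> -1 <= a3 <= 1 -> -1 <= b3 <= 1 ->
  W1 (vsub (Xf t a2 a3) (Xf t b2 b3)) = dnu t / 4 * (a3 - b3) /\
  W3 (vsub (Xf t a2 a3) (Xf t b2 b3)) = dphi t / 4 * (a3 - b3).
Proof. intros Ht Ha Hb. set (y := vsub (Xf t a2 a3) (Xf t b2 b3)).
 pose proof (mt_range t Ht) as Hm. set (m := mt t) in *.
 assert (Y0 : y I0 = (m^2 - m^3) * (a3 - b3)) by (unfold y, vsub, Xf, mk3, nu; cbv beta iota; fold m; ring).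
 assert (Y2 : y I2 = m^2 * (a3 - b3)) by (unfold y, vsub, Xf, mk3, phi; cbv beta iota; fold m; ring).
 unfold dnu, dphi; fold m.
 destruct (Req_dec m 0) as [H0|H0].
 { assert (y I2 = 0) by (rewrite Y2, H0; ring). unfold W1, W3. rewrite (Ff_zero y H), H0. split; clearbody y m; field. }
 destruct (Req_dec (a3 - b3) 0) as [H1|H1].
 { assert (y I2 = 0) by (rewrite Y2, H1; ring). unfold W1, W3. rewrite (Ff_zero y H), H1. split; clearbody y m; field. }
 assert (Q : qf y = m).
 { unfold qf. rewrite Y0, Y2. replace ((m ^ 2 - m ^ 3) * (a3 - b3) / (m ^ 2 * (a3 - b3))) with (1 - m) by (field; auto).
   unfold clamp01, Rmax, Rmin. repeat destruct Rle_dec; lra. }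
 assert (F : Ff y = m * (a3 - b3)).
 { unfold Ff. rewrite Q, Y2. replace (m ^ 2 * (a3 - b3) / m) with (m * (a3 - b3)) by (field; auto).
   unfold med, Rmax, Rmin. repeat destruct Rle_dec; nra. }
 unfold W1, W3. rewrite F, Q. split; field.
Qed.

Lemma coord_le_norm v i : Rabs (v i) <= norm3 v.
Proof. unfold norm3. rewrite <- sqrt_Rsqr_abs. apply sqrt_le_1_alt. unfold Rsqr.
 pose proof (pow2_ge_0 (v I0)). pose proof (pow2_ge_0 (v I1)). pose proof (pow2_ge_0 (v I2)).
 destruct i; simpl; nra. Qed.

Lemma Kf_cont : kernel_continuous Kf.
Proof. intros x e He. destruct (ccont_W1 x e He) as [d1 [D1 H1]]. destruct (ccont_W3 x e He) as [d3 [D3 H3]].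
 exists (Rmin d1 d3). split; [apply Rmin_pos; lra|]. intros y Hy.
 assert (forall i, Rabs (y i - x i) < d1).
 { intros i. pose proof (coord_le_norm (vsub y x) i). change (vsub y x i) with (y i - x i) in H. pose proof (Rmin_l d1 d3). lra. }
 assert (forall i, Rabs (y i - x i) < d3).
 { intros i. pose proof (coord_le_norm (vsub y x) i). change (vsub y x i) with (y i - x i) in H0. pose proof (Rmin_r d1 d3). lra. }
 specialize (H1 y H). specialize (H3 y H0).
 intros i j. destruct j; destruct i; simpl; auto; unfold Rminus; rewrite Rplus_opp_r, Rabs_R0; lra.
Qed.

Lemma nu_lip s t : 0 <= s -> 0 <= t -> Rabs (nu s - nu t) <= 5 * Rabs (s - t).
Proof. intros Hs Ht. pose proof (mt_range s Hs). pose proof (mt_range t Ht). pose proof (mt_lip s t).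
 unfold nu. set (a := mt s) in *. set (b := mt t) in *.
 replace (a ^ 2 - a ^ 3 - (b ^ 2 - b ^ 3)) with ((a - b) * (a + b - (a*a + a*b + b*b))) by ring.
 rewrite Rabs_mult. assert (Rabs (a + b - (a*a + a*b + b*b)) <= 5) by (apply Rabs_le; split; nra).
 pose proof (Rabs_pos (a-b)). pose proof (Rabs_pos (a + b - (a*a + a*b + b*b))). nra. Qed.

Lemma phi_lip s t : 0 <= s -> 0 <= t -> Rabs (phi s - phi t) <= 5 * Rabs (s - t).
Proof. intros Hs Ht. pose proof (mt_range s Hs). pose proof (mt_range t Ht). pose proof (mt_lip s t).
 unfold phi. set (a := mt s) in *. set (b := mt t) in *.
 replace (a ^ 2 - b ^ 2) with ((a - b) * (a + b)) by ring.
 rewrite Rabs_mult. assert (Rabs (a + b) <= 5) by (apply Rabs_le; split; nra).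
 pose proof (Rabs_pos (a-b)). pose proof (Rabs_pos (a + b)). nra. Qed.

Lemma comb_lip (f : R -> R) s t a3 b3 d : 0 <= f t <= 1 -> -1 <= b3 <= 1 ->
  Rabs (f s - f t) <= 5 * Rabs (s - t) -> Rabs (s - t) < d -> Rabs (b3 - a3) < d ->
  Rabs (f s * b3 - f t * a3) < 6 * d.
Proof. intros. replace (f s * b3 - f t * a3) with ((f s - f t) * b3 + f t * (b3 - a3)) by ring.
 eapply Rle_lt_trans. apply Rabs_triang. rewrite !Rabs_mult.
 assert (Rabs b3 <= 1) by (apply Rabs_le; lra). rewrite (Rabs_right (f t)) by lra.
 pose proof (Rabs_pos b3). pose proof (Rabs_pos (f s - f t)). pose proof (Rabs_pos (b3 - a3)). nra. Qed.

Lemma Xf_cont : flow_continuous Xf.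
Proof. intros t a2 a3 Ht Ha e He. exists (e/7). split; [lra|].
 intros s b2 b3 Hs Hb H1 H2 H3 i. pose proof (mt_range t Ht).
 destruct i; unfold Xf, mk3; cbv beta iota.
 - assert (0 <= nu t <= 1) by (unfold nu; split; nra).
   pose proof (comb_lip nu s t a3 b3 (e/7) H0 ltac:(unfold inXi in Hb; lra) (nu_lip s t Hs Ht) H1 H3). lra.
 - lra.
 - assert (0 <= phi t <= 1) by (unfold phi; split; nra).
   pose proof (comb_lip phi s t a3 b3 (e/7) H0 ltac:(unfold inXi in Hb; lra) (phi_lip s t Hs Ht) H1 H3). lra.
Qed.

Lemma dconst (D : R -> Prop) (c : R) t : has_deriv_within D (fun _ => c) t 0.
Proof. intros e He. exists 1. split; [lra|]. intros h _ Hn _.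
 replace ((c - c) / h - 0) with 0 by (field; auto). rewrite Rabs_R0; lra. Qed.
Lemma did (D : R -> Prop) t : has_deriv_within D (fun b => b) t 1.
Proof. intros e He. exists 1. split; [lra|]. intros h _ Hn _.
 replace ((t + h - t) / h - 1) with 0 by (field; auto). rewrite Rabs_R0; lra. Qed.

Theorem theorem4p2 :
  exists (K : vec3 -> mat3) (X : flow_map),
    kernel_continuous K /\ admits_flow K X /\
    exists T : R, T > 0 /\
      forall t, t > T -> forall a2 a3, inXi a2 a3 ->
        X t a2 a3 I0 = 0 /\ -1 <= X t a2 a3 I1 <= 1 /\ X t a2 a3 I2 = 0.
Proof.
 exists Kf, Xf. split; [apply Kf_cont|]. split.
 - split; [apply Xf_cont|]. split.
   + intros a2 a3 _. assert (mt 0 = 1) by (unfold mt, Rmax; destruct Rle_dec; lra).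
     unfold Xf, nu, phi. rewrite H. f_equal; ring.
   + exists dXf. split.
     * intros t a2 a3 Ht Ha i. destruct i; unfold Xf, dXf, mk3; cbv beta iota; [apply dconst|apply did|apply dconst].
     * intros t a2 a3 Ht Ha. exists (mk3 (dnu t * a3) 0 (dphi t * a3)). split.
       -- intros i. destruct Ha as [Ha2 Ha3].
          destruct i; unfold mulmv, Kf, dXf; cbv beta iota; unfold mk3; cbv beta iota.
          ++ apply (integral_lin _ (dnu t / 4) a3); [|field].
             intros b2 b3 _ Hb3. destruct (traj t a2 a3 b2 b3 Ht Ha3 Hb3) as [E1 _]. rewrite E1. ring.
          ++ apply (integral_lin _ 0 a3); [|ring]. intros. ring.
          ++ apply (integral_lin _ (dphi t / 4) a3); [|field].
             intros b2 b3 _ Hb3. destruct (traj t a2 a3 b2 b3 Ht Ha3 Hb3) as [_ E3]. rewrite E3. ring.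
       -- intros i. destruct Ha as [Ha2 Ha3]. destruct i; unfold Xf, mk3; cbv beta iota.
          ++ apply nu_deriv; auto.
          ++ apply dconst.
          ++ apply phi_deriv; auto.
 - exists 1. split; [lra|]. intros t Ht a2 a3 Ha. pose proof (mt_big t Ht).
   unfold Xf, mk3, nu, phi; cbv beta iota. rewrite H. unfold inXi in Ha. repeat split; try ring; lra.
Qed.
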